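(* Let $\mathcal{H}$ be an infinite-dimensional complex separable Hilbert space. Every compact operator $K \in \mathcal{B}(\mathcal{H})$ is a norm limit of commutators $AB - BA$ of compact nilpotent operators $A, B \in \mathcal{B}(\mathcal{H})$; that is, for every $\varepsilon > 0$ there are compact $A, B$ with $A^k = 0 = B^k$ for some $k \ge 1$ and $\|K - (AB - BA)\| < \varepsilon$. *)

(* Defs.v *)
(* The infinite-dimensional complex separable
   Hilbert space is realised concretely as l^2(N; C) (every such space is
   unitarily isomorphic to it, and the statement is invariant under unitary
   equivalence). *)
From Stdlib Require Import Reals.
From Coquelicot Require Import Coquelicot.
Open Scope R_scope.

Definition vec := nat -> C.

Definition l2 (x : vec) : Prop := ex_series (fun n => (Cmod (x n)) ^ 2).

Definition l2norm (x : vec) : R := sqrt (Series (fun n => (Cmod (x n)) ^ 2)).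

Definition vadd (x y : vec) : vec := fun n => Cplus (x n) (y n).
Definition vsub (x y : vec) : vec := fun n => Cminus (x n) (y n).
Definition vscal (a : C) (x : vec) : vec := fun n => Cmult a (x n).

(* an operator is a map on sequences; only its restriction to l^2 matters *)
Definition op := vec -> vec.

Definition bounded_op (T : op) : Prop :=
  (forall x, l2 x -> l2 (T x)) /\
  (forall a x y, l2 x -> l2 y ->
     forall n, T (vadd (vscal a x) y) n = Cplus (Cmult a (T x n)) (T y n)) /\
  (exists M, forall x, l2 x -> l2norm (T x) <= M * l2norm x).

Definition compact_op (T : op) : Prop :=
  bounded_op T /\
  forall u : nat -> vec, (forall k, l2 (u k)) ->
    (exists M, forall k, l2norm (u k) <= M) ->
    exists phi : nat -> nat, (forall k, (phi k < phi (S k))%nat) /\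
      exists y, l2 y /\
        is_lim_seq (fun k => l2norm (vsub (T (u (phi k))) y)) 0.

Definition comp (A B : op) : op := fun x => A (B x).
Definition op_sub (S T : op) : op := fun x => vsub (S x) (T x).
Definition commutator (A B : op) : op := op_sub (comp A B) (comp B A).

Definition op_pow (A : op) (k : nat) : op := fun x => Nat.iter k A x.
Definition pow_zero (A : op) (k : nat) : Prop :=
  forall x, l2 x -> forall n, op_pow A k x n = 0%C.

Definition opnorm_lt (T : op) (eps : R) : Prop :=
  exists c, c < eps /\ forall x, l2 x -> l2norm (T x) <= c * l2norm x.

(* Main.v *)
Require Import Defs.
From Stdlib Require Import Reals Lra Lia Psatz FunctionalExtensionality ClassicalEpsilon Classical.
From Coquelicot Require Import Coquelicot.
Open Scope R_scope.

Definition nsq (x : vec) : R := Series (fun n => Cmod (x n) ^ 2).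

Lemma sqC_nonneg (z : C) : 0 <= Cmod z ^ 2.
Proof. apply pow2_ge_0. Qed.

Lemma sqC_add_w (a b : C) (t : R) : 0 < t ->
  Cmod (a + b)%C ^ 2 <= (1 + t) * Cmod a ^ 2 + (1 + / t) * Cmod b ^ 2.
Proof.
  intros Ht. pose proof (Cmod_triangle a b). pose proof (Cmod_ge_0 (a+b)%C).
  pose proof (Cmod_ge_0 a). pose proof (Cmod_ge_0 b).
  set (p := Cmod a) in *. set (q := Cmod b) in *. set (r := Cmod (a+b)%C) in *.
  assert (r ^ 2 <= (p + q) ^ 2) by nra.
  assert (2 * p * q <= t * p ^ 2 + / t * q ^ 2).
  { assert (0 <= (t * p - q) ^ 2 * / t).
    { apply Rmult_le_pos. apply pow2_ge_0. left; apply Rinv_0_lt_compat; lra. }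
    assert ((t * p - q) ^ 2 * / t = t * p ^ 2 - 2 * p * q + / t * q ^ 2).
    { field. lra. }
    lra. }
  nra.
Qed.

Lemma sqC_add2 (a b : C) : Cmod (a + b)%C ^ 2 <= 2 * Cmod a ^ 2 + 2 * Cmod b ^ 2.
Proof.
  pose proof (sqC_add_w a b 1 Rlt_0_1). rewrite Rinv_1 in H. lra.
Qed.

Lemma l2_dom (x z y : vec) (p q : R) : l2 x -> l2 z -> 0 <= p -> 0 <= q ->
  (forall n, Cmod (y n) ^ 2 <= p * Cmod (x n) ^ 2 + q * Cmod (z n) ^ 2) ->
  l2 y /\ nsq y <= p * nsq x + q * nsq z.
Proof.
  intros Hx Hz Hp Hq H.
  assert (Hb : ex_series (fun n => p * Cmod (x n) ^ 2 + q * Cmod (z n) ^ 2)).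
  { apply (ex_series_plus (fun n => p * Cmod (x n) ^ 2) (fun n => q * Cmod (z n) ^ 2)).
    - apply (ex_series_scal_l p (fun n => Cmod (x n) ^ 2)); exact Hx.
    - apply (ex_series_scal_l q (fun n => Cmod (z n) ^ 2)); exact Hz. }
  assert (Hy : l2 y).
  { unfold l2. apply (ex_series_le (fun n => Cmod (y n) ^ 2) (fun n => p * Cmod (x n) ^ 2 + q * Cmod (z n) ^ 2)); [|exact Hb].
    intros n. change (norm (Cmod (y n) ^ 2)) with (Rabs (Cmod (y n) ^ 2)).
    rewrite Rabs_pos_eq by apply sqC_nonneg. apply H. }
  split; [exact Hy|].
  unfold nsq. rewrite <- Series_scal_l, <- Series_scal_l, <- Series_plus.
  - apply Series_le; [|exact Hb]. intros n; split; [apply sqC_nonneg|apply H].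
  - apply (ex_series_scal_l p (fun n => Cmod (x n) ^ 2)); exact Hx.
  - apply (ex_series_scal_l q (fun n => Cmod (z n) ^ 2)); exact Hz.
Qed.

Lemma series_nonneg (a : nat -> R) : (forall n, 0 <= a n) -> ex_series a -> 0 <= Series a.
Proof.
  intros H Ha. assert (Series (fun _ => 0) = 0).
  { apply is_series_unique. apply is_series_Reals. intros e He. exists 0%nat.
    intros n _. replace (sum_f_R0 (fun _ => 0) n) with 0. unfold Rdist. rewrite Rminus_0_r, Rabs_R0. lra.
    induction n; simpl; lra. }
  rewrite <- H0. apply Series_le; [|exact Ha]. intros n; split; [lra|apply H].
Qed.

Lemma nsq_nonneg x : l2 x -> 0 <= nsq x.
Proof. intros Hx. apply series_nonneg; [intros; apply sqC_nonneg|exact Hx]. Qed.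

Lemma nsq_ext x y : (forall n, x n = y n) -> nsq x = nsq y.
Proof. intros H. unfold nsq. apply Series_ext. intros n; rewrite H; reflexivity. Qed.

Lemma l2_ext x y : (forall n, x n = y n) -> l2 x -> l2 y.
Proof. intros H Hx. unfold l2. eapply ex_series_ext; [|exact Hx]. intros n; simpl; rewrite H; reflexivity. Qed.

Lemma coord_le x n : l2 x -> Cmod (x n) ^ 2 <= nsq x.
Proof.
  intros Hx. unfold nsq. rewrite (Series_incr_n _ (S n)); [|lia|exact Hx].
  simpl Init.Nat.pred.
  assert (0 <= Series (fun k => Cmod (x (S n + k)%nat) ^ 2)).
  { apply series_nonneg. intros; apply sqC_nonneg.
    apply (ex_series_incr_n (fun k => Cmod (x k) ^ 2) (S n)). exact Hx. }
  destruct n.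
  - cbn [sum_f_R0]. lra.
  - rewrite tech5. assert (0 <= sum_f_R0 (fun k => Cmod (x k) ^ 2) n).
    { apply cond_pos_sum. intros; apply sqC_nonneg. }
    lra.
Qed.

Lemma fin_series (a : nat -> R) L : (forall k, (L <= k)%nat -> a k = 0) ->
  is_series a (sum_f_R0 a L).
Proof.
  intros H. apply is_series_Reals. intros e He. exists L. intros n Hn.
  replace (sum_f_R0 a n) with (sum_f_R0 a L). unfold Rdist. rewrite Rminus_diag_eq by reflexivity. rewrite Rabs_R0; lra.
  induction Hn. reflexivity. rewrite tech5, H by lia. lra.
Qed.

Lemma fin_l2 (x : vec) L c : (forall n, (L <= n)%nat -> x n = (RtoC 0)) ->
  (forall n, Cmod (x n) ^ 2 <= c) -> l2 x /\ nsq x <= INR (S L) * c.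
Proof.
  intros Hs Hc.
  assert (Ha : forall k, (L <= k)%nat -> Cmod (x k) ^ 2 = 0).
  { intros k Hk. rewrite Hs by exact Hk. rewrite Cmod_0. ring. }
  pose proof (fin_series _ L Ha) as Hser.
  split. exists (sum_f_R0 (fun k => Cmod (x k) ^ 2) L). exact Hser.
  unfold nsq. rewrite (is_series_unique _ _ Hser).
  clear Hser Ha Hs. induction L.
  - simpl. specialize (Hc 0%nat). lra.
  - rewrite tech5. rewrite S_INR. specialize (Hc (S L)). lra.
Qed.

Lemma zero_l2 : l2 (fun _ : nat => RtoC 0) /\ nsq (fun _ : nat => RtoC 0) = 0.
Proof.
  destruct (fin_l2 (fun _ : nat => RtoC 0) 0 0) as [H1 H2].
  intros; reflexivity. intros; rewrite Cmod_0; simpl; lra.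
  split; [exact H1|]. pose proof (nsq_nonneg _ H1). simpl in H2. lra.
Qed.

Lemma nsq_zero x : l2 x -> nsq x <= 0 -> forall n, x n = (RtoC 0).
Proof.
  intros Hx H n. pose proof (coord_le x n Hx). apply Cmod_eq_0.
  pose proof (Cmod_ge_0 (x n)). nra.
Qed.

Lemma vscal_l2 a x : l2 x -> l2 (vscal a x) /\ nsq (vscal a x) = Cmod a ^ 2 * nsq x.
Proof.
  intros Hx. assert (Hl : l2 (vscal a x)).
  { apply (l2_dom x x (vscal a x) (Cmod a ^ 2) 0 Hx Hx); [apply sqC_nonneg|lra|].
    intros n. unfold vscal. rewrite Cmod_mult. lra. }
  split; [exact Hl|]. unfold nsq, vscal. rewrite <- Series_scal_l. apply Series_ext.
  intros n. rewrite Cmod_mult. ring.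
Qed.

Lemma vadd_l2 x y t : l2 x -> l2 y -> 0 < t ->
  l2 (vadd x y) /\ nsq (vadd x y) <= (1 + t) * nsq x + (1 + / t) * nsq y.
Proof.
  intros Hx Hy Ht. apply l2_dom; auto. lra.
  left. pose proof (Rinv_0_lt_compat t Ht). lra.
  intros n. apply sqC_add_w. exact Ht.
Qed.

Lemma vadd_l2_2 x y : l2 x -> l2 y -> l2 (vadd x y) /\ nsq (vadd x y) <= 2 * nsq x + 2 * nsq y.
Proof.
  intros Hx Hy. destruct (vadd_l2 x y 1 Hx Hy Rlt_0_1) as [H1 H2]. rewrite Rinv_1 in H2.
  split; [exact H1|lra].
Qed.

Lemma vsub_l2 x y : l2 x -> l2 y -> l2 (vsub x y) /\ nsq (vsub x y) <= 2 * nsq x + 2 * nsq y.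
Proof.
  intros Hx Hy. destruct (vscal_l2 (-1)%C y Hy) as [H1 H2].
  destruct (vadd_l2_2 x (vscal (-1)%C y) Hx H1) as [H3 H4].
  assert (He : forall n, vadd x (vscal (-1)%C y) n = vsub x y n).
  { intros n; unfold vadd, vscal, vsub. ring. }
  split. eapply l2_ext; eauto. rewrite <- (nsq_ext _ _ He).
  rewrite H2 in H4. replace (Cmod (-1)%C) with 1 in H4. lra.
  rewrite <- Cmod_m1. f_equal. apply injective_projections; simpl; ring.
Qed.

Definition Qt (N : nat) (x : vec) : vec := fun n => if Nat.ltb n N then (RtoC 0) else x n.
Definition Pt (N : nat) (x : vec) : vec := fun n => if Nat.ltb n N then x n else (RtoC 0).

Lemma Qt_l2 N x : l2 x -> l2 (Qt N x) /\ nsq (Qt N x) <= nsq x.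
Proof.
  intros Hx. destruct (l2_dom x x (Qt N x) 1 0 Hx Hx) as [H1 H2]; try lra.
  intros n. unfold Qt. destruct (Nat.ltb n N); rewrite ?Cmod_0; pose proof (sqC_nonneg (x n)); simpl; lra.
  split; [auto|lra].
Qed.

Lemma Pt_l2 N x : l2 x -> l2 (Pt N x) /\ nsq (Pt N x) <= nsq x.
Proof.
  intros Hx. destruct (l2_dom x x (Pt N x) 1 0 Hx Hx) as [H1 H2]; try lra.
  intros n. unfold Pt. destruct (Nat.ltb n N); rewrite ?Cmod_0; pose proof (sqC_nonneg (x n)); simpl; lra.
  split; [auto|lra].
Qed.

Lemma Qt_mono N N' x : l2 x -> (N <= N')%nat -> nsq (Qt N' x) <= nsq (Qt N x).
Proof.
  intros Hx HN. destruct (Qt_l2 N x Hx) as [H1 _].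
  destruct (l2_dom (Qt N x) (Qt N x) (Qt N' x) 1 0 H1 H1) as [_ H2]; try lra.
  intros n. unfold Qt. destruct (Nat.ltb n N') eqn:E1; destruct (Nat.ltb n N) eqn:E2;
   rewrite ?Cmod_0; pose proof (sqC_nonneg (x n)); simpl; try lra.
  apply Nat.ltb_lt in E2; apply Nat.ltb_ge in E1; lia.
Qed.

Lemma tail_small y : l2 y -> forall e, 0 < e -> exists N, forall n, (N <= n)%nat -> nsq (Qt n y) < e.
Proof.
  intros Hy e He. pose proof (Series_correct _ Hy) as Hs. apply is_series_Reals in Hs.
  destruct (Hs e He) as [N HN]. exists (S N). intros n Hn.
  eapply Rle_lt_trans. apply (Qt_mono (S N) n y Hy Hn).
  assert (nsq (Qt (S N) y) = Series (fun k => Cmod (y (S N + k)%nat) ^ 2)).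
  { unfold nsq. rewrite (Series_incr_n_aux _ (S N)).
    apply Series_ext. intros k. unfold Qt. replace (Nat.ltb (S N + k) (S N)) with false. reflexivity.
    symmetry; apply Nat.ltb_ge; lia.
    intros k Hk. unfold Qt. replace (Nat.ltb k (S N)) with true. rewrite Cmod_0; ring.
    symmetry; apply Nat.ltb_lt; lia. }
  rewrite H. pose proof (Series_incr_n _ (S N) ltac:(lia) Hy). simpl Init.Nat.pred in H0.
  specialize (HN N (le_n N)). unfold Rdist in HN. unfold nsq in *.
  apply Rabs_def2 in HN. lra.
Qed.
Lemma Ceq (a b : C) : fst a = fst b -> snd a = snd b -> a = b.
Proof. intros; apply injective_projections; auto. Qed.

Section Ops.
Variable T : op.
Hypothesis HT : bounded_op T.

Lemma T_l2 x : l2 x -> l2 (T x).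
Proof. apply HT. Qed.

Lemma T_zero n : T (fun _ : nat => RtoC 0) n = (RtoC 0).
Proof.
  destruct HT as [_ [Hlin _]]. destruct zero_l2 as [Z _].
  pose proof (Hlin (-1)%C _ _ Z Z n) as H.
  replace (vadd (vscal (-1)%C (fun _ : nat => RtoC 0)) (fun _ : nat => RtoC 0)) with (fun _ : nat => RtoC 0) in H.
  2:{ apply functional_extensionality; intros k; unfold vadd, vscal. ring. }
  replace (T (fun _ : nat => RtoC 0) n) with ((-1 * T (fun _ : nat => RtoC 0) n + T (fun _ : nat => RtoC 0) n))%C by (rewrite <- H; reflexivity).
  ring.
Qed.

Lemma T_scal a x n : l2 x -> T (vscal a x) n = (a * T x n)%C.
Proof.
  intros Hx. destruct HT as [_ [Hlin _]]. destruct zero_l2 as [Z _].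
  pose proof (Hlin a _ _ Hx Z n) as H.
  replace (vadd (vscal a x) (fun _ : nat => RtoC 0)) with (vscal a x) in H.
  2:{ apply functional_extensionality; intros k; unfold vadd, vscal. ring. }
  rewrite H, T_zero. ring.
Qed.

Lemma T_add x y n : l2 x -> l2 y -> T (vadd x y) n = (T x n + T y n)%C.
Proof.
  intros Hx Hy. destruct HT as [_ [Hlin _]].
  pose proof (Hlin 1%C _ _ Hx Hy n) as H.
  replace (vadd (vscal 1%C x) y) with (vadd x y) in H.
  2:{ apply functional_extensionality; intros k; unfold vadd, vscal. ring. }
  rewrite H. ring.
Qed.

Lemma T_sub x y n : l2 x -> l2 y -> T (vsub x y) n = (T x n - T y n)%C.
Proof.
  intros Hx Hy. destruct HT as [_ [Hlin _]].
  pose proof (Hlin (-1)%C _ _ Hy Hx n) as H.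
  replace (vadd (vscal (-1)%C y) x) with (vsub x y) in H.
  2:{ apply functional_extensionality; intros k; unfold vadd, vscal, vsub. ring. }
  rewrite H. ring.
Qed.

Lemma T_bound : exists M, 0 <= M /\ forall x, l2 x -> nsq (T x) <= M * nsq x.
Proof.
  destruct HT as [Hl [_ [M HM]]]. exists (M ^ 2). split. apply pow2_ge_0.
  intros x Hx. specialize (HM x Hx). unfold l2norm in HM.
  pose proof (nsq_nonneg _ Hx). pose proof (nsq_nonneg _ (Hl x Hx)).
  fold (nsq (T x)) in HM. fold (nsq x) in HM.
  pose proof (sqrt_pos (nsq (T x))).
  rewrite <- (sqrt_sqrt (nsq (T x))) by lra. rewrite <- (sqrt_sqrt (nsq x)) by lra.
  set (a := sqrt (nsq (T x))) in *. set (b := sqrt (nsq x)) in *.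
  assert (a * a <= (M * b) * (M * b)) by (apply Rmult_le_compat; lra).
  nra.
Qed.

End Ops.

Definition incr (phi : nat -> nat) := forall k, (phi k < phi (S k))%nat.

Lemma incr_mono phi : incr phi -> forall a b, (a <= b)%nat -> (phi a <= phi b)%nat.
Proof. intros H a b Hab. induction Hab. lia. specialize (H m). lia. Qed.

Lemma incr_ge phi : incr phi -> forall k, (k <= phi k)%nat.
Proof. intros H k. induction k. lia. specialize (H k). lia. Qed.

Lemma incr_comp phi psi : incr phi -> incr psi -> incr (fun k => phi (psi k)).
Proof.
  intros H1 H2 k. pose proof (H2 k). 
  assert (phi (S (psi k)) <= phi (psi (S k)))%nat by (apply incr_mono; auto).
  specialize (H1 (psi k)). lia.
Qed.

Lemma choice_nat {A : Type} (P : nat -> A -> Prop) : (forall n, exists y, P n y) -> exists f, forall n, P n (f n).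
Proof.
  intros H. exists (fun n => proj1_sig (constructive_indefinite_description _ (H n))).
  intros n. apply proj2_sig.
Qed.

Lemma small_inv e : 0 < e -> exists K, forall k, (K <= k)%nat -> / (INR k + 1) < e.
Proof.
  intros He. destruct (INR_archimed e 1 He) as [K HK]. exists K. intros k Hk.
  apply le_INR in Hk. pose proof (pos_INR K).
  apply (Rmult_lt_reg_r (INR k + 1)). lra. rewrite Rinv_l by lra. nra.
Qed.

Lemma RBW (r : nat -> R) M : (forall k, Rabs (r k) <= M) ->
  exists phi, incr phi /\ exists l, forall e, 0 < e -> exists K, forall k, (K <= k)%nat -> Rabs (r (phi k) - l) < e.
Proof.
  intros HM. destruct (Bolzano_Weierstrass r (fun c => -M <= c <= M) (compact_P3 (-M) M)) as [l Hl].
  { intros k. specialize (HM k). pose proof (Rle_abs (r k)). pose proof (Rle_abs (- r k)).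
    rewrite Rabs_Ropp in H0. lra. }
  assert (Hg : forall p : nat * nat, exists q, (fst p <= q)%nat /\ Rabs (r q - l) < / (INR (snd p) + 1)).
  { intros [N k]. simpl. assert (Hpos : 0 < / (INR k + 1)).
    { apply Rinv_0_lt_compat. pose proof (pos_INR k); lra. }
    destruct (Hl (fun y => Rabs (y - l) < / (INR k + 1)) N) as [q [Hq1 Hq2]].
    { exists (mkposreal _ Hpos). intros y Hy. exact Hy. }
    exists q; auto. }
  assert (Hg' : exists g : nat * nat -> nat, forall p, (fst p <= g p)%nat /\ Rabs (r (g p) - l) < / (INR (snd p) + 1)).
  { exists (fun p => proj1_sig (constructive_indefinite_description _ (Hg p))). intros p. apply proj2_sig. }
  destruct Hg' as [g Hg2].
  set (phi := fix phi k := match k with O => g (0%nat, 0%nat) | S k' => g (S (phi k'), S k') end).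
  exists phi. split.
  - intros k. simpl. destruct (Hg2 (S (phi k), S k)) as [H _]. simpl in H. lia.
  - exists l. intros e He. destruct (small_inv e He) as [K HK]. exists K. intros k Hk.
    eapply Rlt_trans; [|apply (HK k Hk)].
    destruct k; simpl. apply (Hg2 (0%nat, 0%nat)).
    destruct (Hg2 (S (phi k), S k)) as [_ H]. simpl in H. exact H.
Qed.

Lemma Cmod_le2 (w : C) : Cmod w <= 2 * Rmax (Rabs (fst w)) (Rabs (snd w)).
Proof.
  pose proof (Cmod_2Rmax w). assert (sqrt 2 < 2).
  { rewrite <- (sqrt_square 2) at 2 by lra. apply sqrt_lt_1; lra. }
  pose proof (Rle_trans _ _ _ (Rabs_pos (fst w)) (Rmax_l _ (Rabs (snd w)))). nra.
Qed.

Lemma CBW (z : nat -> C) M : (forall k, Cmod (z k) <= M) ->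
  exists phi, incr phi /\ exists l : C, forall e, 0 < e -> exists K, forall k, (K <= k)%nat -> Cmod (z (phi k) - l)%C < e.
Proof.
  intros HM. destruct (RBW (fun k => fst (z k)) M) as [p1 [Hp1 [l1 H1]]].
  { intros k. eapply Rle_trans; [apply (re_le_Cmod (z k))|apply HM]. }
  destruct (RBW (fun k => snd (z (p1 k))) M) as [p2 [Hp2 [l2 H2]]].
  { intros k. eapply Rle_trans; [|apply (HM (p1 k))]. 
    pose proof (Rmax_Cmod (z (p1 k))). eapply Rle_trans; [apply Rmax_r|exact H]. }
  exists (fun k => p1 (p2 k)). split. apply incr_comp; auto.
  exists (l1, l2). intros e He.
  destruct (H1 (e/2)) as [K1 HK1]. lra. destruct (H2 (e/2)) as [K2 HK2]. lra.
  exists (Nat.max K1 K2). intros k Hk.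
  eapply Rle_lt_trans. apply Cmod_le2. simpl.
  assert (k <= p2 k)%nat by (apply incr_ge; auto).
  specialize (HK1 (p2 k) ltac:(lia)). specialize (HK2 k ltac:(lia)).
  replace (fst (z (p1 (p2 k))) + - l1) with (fst (z (p1 (p2 k))) - l1) by ring.
  replace (snd (z (p1 (p2 k))) + - l2) with (snd (z (p1 (p2 k))) - l2) by ring.
  apply Rmax_case; lra.
Qed.

Lemma fin_l2' (x : vec) L : (forall n, (L <= n)%nat -> x n = RtoC 0) -> l2 x.
Proof.
  intros Hs. exists (sum_f_R0 (fun k => Cmod (x k) ^ 2) L). apply fin_series.
  intros k Hk. rewrite Hs by exact Hk. rewrite Cmod_0. ring.
Qed.

Lemma coord_le2 x n : l2 x -> Cmod (x n) <= l2norm x.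
Proof.
  intros Hx. unfold l2norm. fold (nsq x). rewrite <- (sqrt_pow2 (Cmod (x n))) by apply Cmod_ge_0.
  apply sqrt_le_1_alt. apply coord_le; auto.
Qed.

Lemma l2norm_sq x : l2 x -> l2norm x ^ 2 = nsq x.
Proof. intros Hx. unfold l2norm. fold (nsq x). simpl. rewrite Rmult_1_r. apply sqrt_sqrt. apply nsq_nonneg; auto. Qed.

Lemma ev_all L (P : nat -> nat -> Prop) :
  (forall n, (n < L)%nat -> exists K, forall k, (K <= k)%nat -> P n k) ->
  exists K, forall k, (K <= k)%nat -> forall n, (n < L)%nat -> P n k.
Proof.
  induction L; intros H. exists 0%nat; intros; lia.
  destruct IHL as [K1 H1]. intros n Hn; apply H; lia.
  destruct (H L ltac:(lia)) as [K2 H2]. exists (Nat.max K1 K2). intros k Hk n Hn.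
  destruct (Nat.eq_dec n L). subst; apply H2; lia. apply H1; lia.
Qed.

Lemma compact_use T : compact_op T -> forall u, (forall k, l2 (u k)) -> (exists M, forall k, nsq (u k) <= M) ->
  exists phi, incr phi /\ exists y, l2 y /\ forall e, 0 < e -> exists K, forall k, (K <= k)%nat ->
    nsq (vsub (T (u (phi k))) y) < e.
Proof.
  intros [HT HC] u Hu [M HM].
  destruct (HC u Hu) as [phi [Hphi [y [Hy Hlim]]]].
  { exists (sqrt M). intros k. unfold l2norm. apply sqrt_le_1_alt. apply HM. }
  exists phi; split; [exact Hphi|]. exists y; split; [exact Hy|].
  intros e He. apply is_lim_seq_spec in Hlim.
  assert (Hse : 0 < sqrt e) by (apply sqrt_lt_R0; auto).
  destruct (Hlim (mkposreal _ Hse)) as [K HK]. exists K. intros k Hk. specialize (HK k Hk).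
  simpl in HK. rewrite Rminus_0_r in HK. 
  destruct (vsub_l2 (T (u (phi k))) y) as [Hl _]. apply (proj1 HT); auto. auto.
  rewrite <- l2norm_sq by auto. pose proof (Rle_abs (l2norm (vsub (T (u (phi k))) y))).
  unfold l2norm in *. fold (nsq (vsub (T (u (phi k))) y)) in *.
  pose proof (sqrt_pos (nsq (vsub (T (u (phi k))) y))).
  rewrite <- (sqrt_sqrt e) by lra. simpl. rewrite Rmult_1_r. 
  apply Rmult_le_0_lt_compat; lra.
Qed.

Lemma fin_compact T L : bounded_op T ->
  (forall x, l2 x -> forall n, (L <= n)%nat -> T x n = RtoC 0) -> compact_op T.
Proof.
  intros HT Hsupp. split; [exact HT|]. intros u Hu [M HM].
  destruct HT as [Hl2 [Hlin [M0 HM0]]].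
  assert (Hb : forall k n, Cmod (T (u k) n) <= Rabs M0 * M).
  { intros k n. eapply Rle_trans. apply coord_le2. apply Hl2; auto.
    eapply Rle_trans. apply HM0; auto.
    assert (0 <= l2norm (u k)) by apply sqrt_pos.
    specialize (HM k). pose proof (Rle_abs M0). pose proof (Rabs_pos M0). nra. }
  assert (Hind : forall L', exists phi, incr phi /\ exists y : vec, forall n, (n < L')%nat ->
     forall e, 0 < e -> exists K, forall k, (K <= k)%nat -> Cmod (T (u (phi k)) n - y n)%C < e).
  { induction L'.
    - exists (fun k => k). split. intros k; lia. exists (fun _ => RtoC 0). intros; lia.
    - destruct IHL' as [phi [Hphi [y Hy]]].
      destruct (CBW (fun k => T (u (phi k)) L') (Rabs M0 * M)) as [psi [Hpsi [l Hl]]].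
      { intros k; apply Hb. }
      exists (fun k => phi (psi k)). split. apply incr_comp; auto.
      exists (fun n => if Nat.eqb n L' then l else y n). intros n Hn e He.
      destruct (Nat.eqb n L') eqn:E.
      + apply Nat.eqb_eq in E. subst n. apply Hl; auto.
      + apply Nat.eqb_neq in E. destruct (Hy n ltac:(lia) e He) as [K HK].
        exists K. intros k Hk. apply HK. pose proof (incr_ge psi Hpsi k). lia. }
  destruct (Hind L) as [phi [Hphi [y Hy]]].
  exists phi. split; [exact Hphi|].
  set (y' := fun n => if Nat.ltb n L then y n else RtoC 0).
  assert (Hy'0 : forall n, (L <= n)%nat -> y' n = RtoC 0).
  { intros n Hn. unfold y'. replace (Nat.ltb n L) with false. reflexivity. symmetry; apply Nat.ltb_ge; lia. }
  exists y'. split. apply (fin_l2' y' L Hy'0).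
  apply is_lim_seq_spec. intros eps.
  set (c := eps * eps / (2 * (INR L + 1))).
  assert (Hc : 0 < c). { unfold c. pose proof (pos_INR L). pose proof (cond_pos eps).
    apply Rdiv_lt_0_compat; nra. }
  destruct (ev_all L (fun n k => Cmod (T (u (phi k)) n - y n)%C < sqrt c)) as [K HK].
  { intros n Hn. apply Hy; auto. apply sqrt_lt_R0; auto. }
  exists K. intros k Hk. specialize (HK k Hk).
  destruct (fin_l2 (vsub (T (u (phi k))) y') L c) as [Hl Hn].
  { intros n Hn. unfold vsub. rewrite Hy'0, Hsupp; auto. unfold Cminus. 
    apply Ceq; simpl; ring. }
  { intros n. unfold vsub, y'. destruct (Nat.ltb n L) eqn:E.
    - apply Nat.ltb_lt in E. specialize (HK n E). pose proof (Cmod_ge_0 (T (u (phi k)) n - y n)%C).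
      rewrite <- (sqrt_sqrt c) by lra. simpl. rewrite Rmult_1_r. 
      pose proof (sqrt_pos c). nra.
    - apply Nat.ltb_ge in E. rewrite Hsupp by auto. 
      replace (RtoC 0 - RtoC 0)%C with (RtoC 0) by (apply Ceq; simpl; ring).
      rewrite Cmod_0. simpl. lra. }
  rewrite Rminus_0_r. unfold l2norm. fold (nsq (vsub (T (u (phi k))) y')).
  rewrite Rabs_pos_eq by apply sqrt_pos.
  assert (nsq (vsub (T (u (phi k))) y') < eps * eps).
  { eapply Rle_lt_trans. apply Hn. unfold c. rewrite S_INR. pose proof (pos_INR L).
    pose proof (cond_pos eps).
    replace (( INR L + 1) * (eps * eps / (2 * (INR L + 1)))) with (eps * eps / 2) by (field; lra). nra. }
  rewrite <- (sqrt_square eps) by (left; apply cond_pos). apply sqrt_lt_1_alt. split; auto.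
  apply nsq_nonneg; auto.
Qed.

Lemma norm_coef x : l2 x -> 0 < nsq x -> Cmod (RtoC (/ sqrt (nsq x))) ^ 2 * nsq x = 1.
Proof.
  intros Hx Hp. rewrite Cmod_R. rewrite Rabs_pos_eq.
  2:{ left; apply Rinv_0_lt_compat, sqrt_lt_R0; auto. }
  rewrite pow_inv. simpl. rewrite Rmult_1_r. rewrite sqrt_sqrt by lra. field. lra.
Qed.

Lemma T_null T x : bounded_op T -> l2 x -> nsq x <= 0 -> forall n, T x n = RtoC 0.
Proof.
  intros HT Hx H n. replace x with (fun _ : nat => RtoC 0). apply T_zero; auto.
  apply functional_extensionality. intros k. symmetry. apply nsq_zero; auto.
Qed.

Lemma nsq_pos_of T x c : bounded_op T -> l2 x -> c < nsq (T x) -> 0 <= c -> 0 < nsq x.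
Proof.
  intros HT Hx H Hc. destruct (Rle_lt_dec (nsq x) 0) as [H0|H0]; auto.
  exfalso. rewrite (nsq_ext (T x) (fun _ => RtoC 0)) in H. destruct zero_l2 as [_ Z]. lra.
  intros n. apply T_null; auto.
Qed.

Lemma Fact1 K : compact_op K -> forall d, 0 < d -> exists N0, forall N, (N0 <= N)%nat ->
  forall x, l2 x -> nsq (Qt N (K x)) <= d * nsq x.
Proof.
  intros HK d Hd. pose proof (proj1 HK) as HKb.
  destruct (classic (exists N0, forall N, (N0 <= N)%nat -> forall x, l2 x -> nsq (Qt N (K x)) <= d * nsq x)) as [H|H]; auto.
  exfalso.
  assert (Hs : forall j, exists p : nat * vec, (j <= fst p)%nat /\ l2 (snd p) /\ d * nsq (snd p) < nsq (Qt (fst p) (K (snd p)))).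
  { intros j. apply NNPP. intros Hn. apply H. exists j. intros N HN x Hx.
    apply Rnot_lt_le. intros Hc. apply Hn. exists (N, x). simpl; auto. }
  destruct (choice_nat _ Hs) as [f Hf].
  set (a := fun j => RtoC (/ sqrt (nsq (snd (f j))))).
  set (u := fun j => vscal (a j) (snd (f j))).
  assert (Hxpos : forall j, 0 < nsq (snd (f j))).
  { intros j. destruct (Hf j) as [_ [Hl Hlt]]. destruct (Rle_lt_dec (nsq (snd (f j))) 0); auto.
    exfalso. rewrite (nsq_ext (Qt (fst (f j)) (K (snd (f j)))) (fun _ => RtoC 0)) in Hlt. destruct zero_l2 as [_ Z].
    rewrite Z in Hlt. pose proof (nsq_nonneg _ Hl). nra.
    intros n. unfold Qt. destruct (Nat.ltb n (fst (f j))); auto. apply T_null; auto. }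
  assert (Hu : forall j, l2 (u j) /\ nsq (u j) = 1).
  { intros j. destruct (Hf j) as [_ [Hl _]]. destruct (vscal_l2 (a j) _ Hl) as [H1 H2].
    split; auto. unfold u. rewrite H2. apply norm_coef; auto. }
  assert (Hbig : forall j, d < nsq (Qt (fst (f j)) (K (u j)))).
  { intros j. destruct (Hf j) as [_ [Hl Hlt]]. destruct (Qt_l2 (fst (f j)) (K (snd (f j)))) as [Hq _].
    apply HKb; auto.
    destruct (vscal_l2 (a j) _ Hq) as [_ H2].
    rewrite (nsq_ext _ (vscal (a j) (Qt (fst (f j)) (K (snd (f j)))))).
    2:{ intros n. unfold Qt, u, vscal. destruct (Nat.ltb n (fst (f j))). apply Ceq; simpl; ring.
        apply (T_scal K HKb (a j) (snd (f j)) n Hl). }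
    rewrite H2. pose proof (norm_coef _ Hl (Hxpos j)). fold (a j) in H0.
    assert (0 < Cmod (a j) ^ 2) by (pose proof (Hxpos j); nra).
    apply (Rmult_lt_compat_l (Cmod (a j) ^ 2)) in Hlt; auto. nra. }
  destruct (compact_use K HK u (fun j => proj1 (Hu j))) as [phi [Hphi [y [Hy Hc]]]].
  { exists 1. intros k. rewrite (proj2 (Hu k)). lra. }
  destruct (tail_small y Hy (d/4)) as [N1 HN1]. lra.
  destruct (Hc (d/4)) as [K1 HK1]. lra.
  set (k := Nat.max N1 K1).
  specialize (HK1 k ltac:(unfold k; lia)).
  assert (Hge : (N1 <= fst (f (phi k)))%nat).
  { destruct (Hf (phi k)) as [H1 _]. pose proof (incr_ge phi Hphi k). unfold k in *. lia. }
  specialize (HN1 _ Hge). specialize (Hbig (phi k)).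
  set (N := fst (f (phi k))) in *.
  assert (Hl1 : l2 (vsub (K (u (phi k))) y)). apply vsub_l2; auto. apply HKb. apply Hu.
  destruct (Qt_l2 N _ Hl1) as [Hq1 Hq1'].
  destruct (Qt_l2 N _ Hy) as [Hq2 _].
  destruct (vadd_l2_2 _ _ Hq1 Hq2) as [_ Hsum].
  rewrite (nsq_ext (Qt N (K (u (phi k)))) (vadd (Qt N (vsub (K (u (phi k))) y)) (Qt N y))) in Hbig.
  lra.
  intros n. unfold Qt, vadd, vsub. destruct (Nat.ltb n N); apply Ceq; simpl; ring.
Qed.

Lemma Cmod_INR2 (r : R) : Cmod (RtoC r) ^ 2 = r ^ 2.
Proof. rewrite Cmod_R. apply pow2_abs. Qed.

Lemma Fact2 K : compact_op K -> forall d, 0 < d -> exists N0, forall N, (N0 <= N)%nat ->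
  forall x, l2 x -> nsq (K (Qt N x)) <= d * nsq x.
Proof.
  intros HK d Hd. pose proof (proj1 HK) as HKb.
  destruct (T_bound K HKb) as [MK [HMK0 HMK]].
  destruct (classic (exists N0, forall N, (N0 <= N)%nat -> forall x, l2 x -> nsq (K (Qt N x)) <= d * nsq x)) as [H|H]; auto.
  exfalso. set (d' := d / 4).
  assert (Hs0 : forall j, exists p : nat * vec, (j <= fst p)%nat /\ l2 (snd p) /\ d * nsq (snd p) < nsq (K (Qt (fst p) (snd p)))).
  { intros j. apply NNPP. intros Hn. apply H. exists j. intros N HN x Hx.
    apply Rnot_lt_le. intros Hc. apply Hn. exists (N, x). simpl; auto. }
  assert (G : forall N0, exists q : nat * vec, (N0 < fst q)%nat /\ l2 (snd q) /\
            (forall n, (n < N0)%nat -> snd q n = RtoC 0) /\ (forall n, (fst q <= n)%nat -> snd q n = RtoC 0) /\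
            nsq (snd q) = 1 /\ d' < nsq (K (snd q))).
  { intros N0. destruct (Hs0 N0) as [[N x] [HN [Hx Hlt]]]. simpl in *.
    set (w := Qt N x). destruct (Qt_l2 N x Hx) as [Hw Hwx]. fold w in Hw, Hwx, Hlt.
    pose proof (nsq_nonneg _ Hx). pose proof (nsq_nonneg _ Hw).
    assert (HKw : 0 < nsq (K w)) by nra.
    destruct (tail_small w Hw (nsq (K w) / (4 * (MK + 1)))) as [N1' HN1'].
    { apply Rdiv_lt_0_compat; lra. }
    set (N1 := Nat.max N1' (S N)).
    specialize (HN1' N1 ltac:(unfold N1; lia)).
    set (v' := Pt N1 w). destruct (Pt_l2 N1 w Hw) as [Hv' Hv'w]. fold v' in Hv', Hv'w.
    destruct (Qt_l2 N1 w Hw) as [Hq _].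
    assert (Hdec : forall n, K w n = (K v' n + K (Qt N1 w) n)%C).
    { intros n. rewrite <- T_add by auto. f_equal. apply functional_extensionality. intros k.
      unfold vadd, v', Pt, Qt. destruct (Nat.ltb k N1); apply Ceq; simpl; ring. }
    assert (HKv'l : l2 (K v')) by (apply HKb; auto).
    assert (HKql : l2 (K (Qt N1 w))) by (apply HKb; auto).
    destruct (vadd_l2_2 _ _ HKv'l HKql) as [_ Hsum].
    rewrite <- (nsq_ext (K w)) in Hsum by (intros n; unfold vadd; rewrite Hdec; reflexivity).
    pose proof (HMK (Qt N1 w) Hq). pose proof (nsq_nonneg _ Hq).
    assert (2 * MK * nsq (Qt N1 w) <= nsq (K w) / 2).
    { set (e := nsq (K w) / (4 * (MK + 1))) in *.
      assert (He : 0 < e) by (unfold e; apply Rdiv_lt_0_compat; lra).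
      assert (Hme : MK * nsq (Qt N1 w) <= (MK + 1) * e) by nra.
      replace ((MK + 1) * e) with (nsq (K w) / 4) in Hme by (unfold e; field; lra).
      lra. }
    assert (HKv' : d' * nsq v' < nsq (K v')).
    { unfold d'. pose proof (nsq_nonneg _ Hv'). nra. }
    assert (Hv'pos : 0 < nsq v').
    { apply (nsq_pos_of K v' 0 HKb Hv'); [|lra]. pose proof (nsq_nonneg _ Hv'). unfold d' in HKv'. nra. }
    set (a := RtoC (/ sqrt (nsq v'))).
    destruct (vscal_l2 a v' Hv') as [Hv Hnv].
    pose proof (norm_coef v' Hv' Hv'pos) as Hco. fold a in Hco.
    exists (N1, vscal a v'). simpl. repeat split.
    - unfold N1; lia.
    - exact Hv.
    - intros n Hn. unfold vscal, v', Pt, w, Qt. destruct (Nat.ltb n N1); [|apply Ceq; simpl; ring].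
      replace (Nat.ltb n N) with true. apply Ceq; simpl; ring. symmetry; apply Nat.ltb_lt; lia.
    - intros n Hn. unfold vscal, v', Pt. replace (Nat.ltb n N1) with false. apply Ceq; simpl; ring.
      symmetry; apply Nat.ltb_ge; lia.
    - rewrite Hnv. exact Hco.
    - destruct (vscal_l2 a (K v') HKv'l) as [_ H5].
      rewrite (nsq_ext (K (vscal a v')) (vscal a (K v'))) by (intros n; unfold vscal; apply T_scal; auto).
      rewrite H5. assert (0 < Cmod a ^ 2) by nra.
      apply (Rmult_lt_compat_l (Cmod a ^ 2)) in HKv'; auto.
      assert (Cmod a ^ 2 * (d' * nsq v') = d') by (transitivity (d' * (Cmod a ^ 2 * nsq v')); [ring| rewrite Hco; ring]).
      lra. }
  destruct (choice_nat _ G) as [g Hg].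
  set (Nj := fix Nj j := match j with O => O | S j' => fst (g (Nj j')) end).
  set (xs := fun j => snd (g (Nj j))).
  assert (HNj : incr Nj). { intros j. simpl. apply (Hg (Nj j)). }
  assert (Hxs : forall j, l2 (xs j) /\ (forall n, (n < Nj j)%nat -> xs j n = RtoC 0) /\
            (forall n, (Nj (S j) <= n)%nat -> xs j n = RtoC 0) /\ nsq (xs j) = 1 /\ d' < nsq (K (xs j))).
  { intros j. destruct (Hg (Nj j)) as [_ [H1 [H2 [H3 [H4 H5]]]]]. unfold xs. repeat split; auto. }
  destruct (compact_use K HK xs (fun j => proj1 (Hxs j))) as [phi [Hphi [y [Hy Hc]]]].
  { exists 1. intros k. destruct (Hxs k) as [_ [_ [_ [H4 _]]]]. lra. }
  assert (Hdp : 0 < d') by (unfold d'; lra).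
  assert (Hyb : d' / 4 < nsq y).
  { destruct (Hc (d' / 4)) as [K0 HK0]. lra. specialize (HK0 K0 (le_n _)).
    destruct (Hxs (phi K0)) as [Hl [_ [_ [_ Hb]]]].
    assert (HKl : l2 (K (xs (phi K0)))) by (apply HKb; auto).
    destruct (vsub_l2 _ _ HKl Hy) as [Hsl _].
    destruct (vadd_l2_2 _ _ Hsl Hy) as [_ Hs].
    rewrite (nsq_ext (vadd (vsub (K (xs (phi K0))) y) y) (K (xs (phi K0)))) in Hs.
    lra. intros n; unfold vadd, vsub; ring. }
  set (eta := d' / 16).
  destruct (Hc eta) as [J HJ]. unfold eta; lra.
  destruct (INR_archimed (d' / 8) (2 * MK)) as [m0 Hm0]. lra.
  set (m := S m0).
  set (z := fix z i := match i with O => (fun _ : nat => RtoC 0) | S i' => vadd (z i') (xs (phi (J + i')%nat)) end).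
  set (w := fun i => vsub (K (z i)) (vscal (RtoC (INR i)) y)).
  destruct zero_l2 as [Z0 Z1].
  assert (Hinv : forall i, l2 (z i) /\ (forall n, (Nj (phi (J + i)%nat) <= n)%nat -> z i n = RtoC 0) /\
      nsq (z i) = INR i /\ l2 (w i) /\ nsq (w i) <= INR i ^ 2 * eta).
  { assert (Hz0 : z 0%nat = (fun _ : nat => RtoC 0)) by reflexivity.
    assert (Hz1 : forall i, z (S i) = vadd (z i) (xs (phi (J + i)%nat))) by reflexivity.
    clearbody z.
    assert (Hw0 : forall n, w 0%nat n = RtoC 0).
    { intros n. unfold w, vsub, vscal. rewrite Hz0, T_zero by auto. apply Ceq; simpl; ring. }
    induction i.
    - split; [rewrite Hz0; exact Z0|]. split; [intros; rewrite Hz0; reflexivity|].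
      split; [rewrite Hz0, Z1; simpl; ring|].
      assert (Hwl : l2 (w 0%nat)).
      { unfold w. apply vsub_l2. apply HKb. rewrite Hz0; exact Z0. apply vscal_l2; auto. }
      split; auto. rewrite (nsq_ext _ _ Hw0), Z1. simpl. lra.
    - destruct IHi as [I1 [I2 [I3 [I4 I5]]]].
      set (X := xs (phi (J + i)%nat)).
      destruct (Hxs (phi (J + i)%nat)) as [Xl [Xlo [Xhi [Xn XK]]]]. fold X in Xl, Xlo, Xhi, Xn, XK.
      assert (Hphi' : (S (phi (J + i)%nat) <= phi (J + S i)%nat)%nat).
      { replace (J + S i)%nat with (S (J + i)) by lia. apply Hphi. }
      assert (HNjm : (Nj (S (phi (J + i)%nat)) <= Nj (phi (J + S i)%nat))%nat) by (apply incr_mono; auto).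
      assert (HNjm2 : (Nj (phi (J + i)%nat) < Nj (S (phi (J + i)%nat)))%nat) by apply HNj.
      split. rewrite Hz1. apply vadd_l2_2; auto.
      split. intros n Hn. rewrite Hz1. unfold vadd. fold X. rewrite I2, Xhi by lia. apply Ceq; simpl; ring.
      split. rewrite Hz1. fold X. unfold nsq.
      rewrite (Series_ext _ (fun n => Cmod (z i n) ^ 2 + Cmod (X n) ^ 2)).
      rewrite Series_plus by auto. fold (nsq (z i)) (nsq X). rewrite I3, Xn, S_INR. ring.
      { intros n. unfold vadd. destruct (Compare_dec.lt_dec n (Nj (phi (J + i)%nat))) as [Hl|Hl].
        - rewrite (Xlo n Hl). replace (z i n + RtoC 0)%C with (z i n) by (apply Ceq; simpl; ring).
          rewrite Cmod_0. ring.
        - rewrite (I2 n ltac:(lia)). replace (RtoC 0 + X n)%C with (X n) by (apply Ceq; simpl; ring).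
          rewrite Cmod_0. ring. }
      assert (HKX : l2 (K X)) by (apply HKb; auto).
      destruct (vsub_l2 _ _ HKX Hy) as [Hvs _].
      assert (HwS : forall n, vadd (w i) (vsub (K X) y) n = w (S i) n).
      { intros n. unfold w, vsub, vadd, vscal. rewrite Hz1. fold X. rewrite T_add by auto.
        rewrite S_INR. apply Ceq; simpl; ring. }
      assert (Hconv : nsq (vsub (K X) y) < eta) by (apply HJ; lia).
      destruct (vadd_l2_2 _ _ I4 Hvs) as [Hsl _].
      split. apply (l2_ext _ _ HwS Hsl).
      rewrite <- (nsq_ext _ _ HwS).
      destruct (Nat.eq_dec i 0) as [Hi|Hi].
      + subst i. rewrite (nsq_ext _ (vsub (K X) y)). simpl. lra.
        intros n. unfold vadd. rewrite Hw0. apply Ceq; simpl; ring.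
      + assert (Hr : 0 < INR i) by (apply lt_0_INR; lia).
        destruct (vadd_l2 _ _ (/ INR i) I4 Hvs) as [_ Hb]. apply Rinv_0_lt_compat; auto.
        rewrite Rinv_inv in Hb. rewrite S_INR.
        pose proof (nsq_nonneg _ I4). pose proof (nsq_nonneg _ Hvs).
        assert (Hinvp : 0 < / INR i) by (apply Rinv_0_lt_compat; auto).
        assert ((1 + / INR i) * nsq (w i) <= (1 + / INR i) * (INR i ^ 2 * eta)) by (apply Rmult_le_compat_l; lra).
        replace ((1 + / INR i) * (INR i ^ 2 * eta)) with (INR i ^ 2 * eta + INR i * eta) in H2 by (field; lra).
        assert (0 < eta) by (unfold eta; lra).
        nra. }
  destruct (Hinv m) as [Hz1 [_ [Hz3 [Hw1 Hw2]]]].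
  pose proof (HMK (z m) Hz1) as HKz. rewrite Hz3 in HKz.
  assert (HKzl : l2 (K (z m))) by (apply HKb; auto).
  destruct (vsub_l2 _ _ HKzl Hw1) as [_ Hfin].
  rewrite (nsq_ext _ (vscal (RtoC (INR m)) y)) in Hfin.
  2:{ intros n. unfold w, vsub, vscal. ring. }
  destruct (vscal_l2 (RtoC (INR m)) y Hy) as [_ Hmy]. rewrite Hmy, Cmod_INR2 in Hfin.
  assert (Hm1 : 1 <= INR m) by (unfold m; rewrite S_INR; pose proof (pos_INR m0); lra).
  assert (INR m * (d' / 8) > 2 * MK) by (unfold m; rewrite S_INR; pose proof (pos_INR m0); lra).
  unfold eta in Hw2, Hfin.
  assert (INR m ^ 2 * (d' / 4) < INR m ^ 2 * nsq y) by (apply Rmult_lt_compat_l; nra).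
  nra.
Qed.

Definition Sh (N s : nat) (x : vec) : vec := fun k => if Nat.ltb k N then x (k + s)%nat else RtoC 0.
Definition Aop (N m : nat) (x : vec) : vec :=
  fun n => if andb (Nat.leb N n) (Nat.ltb n (S m * N)) then x (n - N)%nat else RtoC 0.
Definition cf (m j : nat) : C := RtoC ((INR j - INR m) / INR m).
Definition Bop (K : op) (N m : nat) (x : vec) : vec :=
  fun n => if Nat.ltb n (m * N) then (cf m (n / N) * K (Sh N (S (n / N) * N) x) (n mod N))%C else RtoC 0.

Lemma nsq_bnd_of (T : op) : (forall x, l2 x -> l2 (T x)) ->
  (exists c, forall x, l2 x -> nsq (T x) <= c * nsq x) ->
  exists M, forall x, l2 x -> l2norm (T x) <= M * l2norm x.
Proof.
  intros Hl [c Hc]. exists (sqrt (Rabs c)). intros x Hx. unfold l2norm. fold (nsq (T x)) (nsq x).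
  rewrite <- sqrt_mult by (apply Rabs_pos || apply nsq_nonneg; auto).
  apply sqrt_le_1_alt. eapply Rle_trans. apply Hc; auto.
  apply Rmult_le_compat_r. apply nsq_nonneg; auto. apply Rle_abs.
Qed.

Lemma Sh_l2 N s x : l2 x -> l2 (Sh N s x) /\ nsq (Sh N s x) <= INR (S N) * nsq x.
Proof.
  intros Hx. apply fin_l2.
  - intros n Hn. unfold Sh. replace (Nat.ltb n N) with false. reflexivity. symmetry; apply Nat.ltb_ge; auto.
  - intros n. unfold Sh. destruct (Nat.ltb n N). apply coord_le; auto. rewrite Cmod_0.
    simpl. rewrite Rmult_0_l. apply nsq_nonneg; auto.
Qed.

Lemma Sh_lin N s a x y : Sh N s (vadd (vscal a x) y) = vadd (vscal a (Sh N s x)) (Sh N s y).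
Proof.
  apply functional_extensionality. intros k. unfold Sh, vadd, vscal. destruct (Nat.ltb k N); auto.
  apply Ceq; simpl; ring.
Qed.

Lemma A_bounded N m : bounded_op (Aop N m).
Proof.
  assert (Hb : forall x, l2 x -> l2 (Aop N m x) /\ nsq (Aop N m x) <= INR (S (S m * N)) * nsq x).
  { intros x Hx. apply fin_l2.
    - intros n Hn. unfold Aop. replace (Nat.ltb n (S m * N)) with false. rewrite Bool.andb_false_r. reflexivity.
      symmetry; apply Nat.ltb_ge; auto.
    - intros n. unfold Aop. destruct (andb _ _). apply coord_le; auto. rewrite Cmod_0.
      simpl. rewrite Rmult_0_l. apply nsq_nonneg; auto. }
  split; [intros; apply Hb; auto|]. split.
  - intros a x y Hx Hy n. unfold Aop, vadd, vscal. destruct (andb _ _); auto. apply Ceq; simpl; ring.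
  - apply nsq_bnd_of. intros; apply Hb; auto. exists (INR (S (S m * N))). intros; apply Hb; auto.
Qed.

Lemma cf_bound m j : (1 <= m)%nat -> (j <= m)%nat -> Cmod (cf m j) ^ 2 <= 1.
Proof.
  intros Hm Hj. unfold cf. rewrite Cmod_INR2. apply le_INR in Hm, Hj. simpl in Hm.
  assert (0 <= INR j) by apply pos_INR.
  assert (-1 <= (INR j - INR m) / INR m <= 0).
  { split. apply (Rmult_le_reg_r (INR m)). lra. unfold Rdiv. rewrite Rmult_assoc, Rinv_l by lra. lra.
    apply (Rmult_le_reg_r (INR m)). lra. unfold Rdiv. rewrite Rmult_assoc, Rinv_l by lra. lra. }
  nra.
Qed.

Section BSec.
Variable K : op.
Hypothesis HKb : bounded_op K.
Variables N m : nat.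
Hypothesis HN : (1 <= N)%nat.
Hypothesis Hm : (1 <= m)%nat.

Lemma B_bounded : bounded_op (Bop K N m).
Proof.
  destruct (T_bound K HKb) as [MK [HMK0 HMK]].
  assert (Hb : forall x, l2 x -> l2 (Bop K N m x) /\ nsq (Bop K N m x) <= INR (S (m * N)) * (MK * INR (S N) * nsq x)).
  { intros x Hx. apply fin_l2.
    - intros n Hn. unfold Bop. replace (Nat.ltb n (m * N)) with false. reflexivity. symmetry; apply Nat.ltb_ge; auto.
    - intros n. unfold Bop. destruct (Nat.ltb n (m * N)) eqn:E.
      + apply Nat.ltb_lt in E. rewrite Cmod_mult, Rpow_mult_distr.
        assert (Hj : (n / N <= m)%nat).
        { pose proof (Nat.div_mod_eq n N). nia. }
        pose proof (cf_bound m (n / N) Hm Hj).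
        destruct (Sh_l2 N (S (n / N) * N) x Hx) as [Hs1 Hs2].
        pose proof (coord_le (K (Sh N (S (n / N) * N) x)) (n mod N) (proj1 HKb _ Hs1)).
        pose proof (HMK _ Hs1). pose proof (sqC_nonneg (cf m (n / N))).
        pose proof (sqC_nonneg (K (Sh N (S (n / N) * N) x) (n mod N))).
        assert (Cmod (K (Sh N (S (n / N) * N) x) (n mod N)) ^ 2 <= MK * INR (S N) * nsq x).
        { eapply Rle_trans. apply H0. eapply Rle_trans. apply H1. rewrite Rmult_assoc. apply Rmult_le_compat_l; auto. }
        nra.
      + rewrite Cmod_0. simpl. rewrite Rmult_0_l. pose proof (nsq_nonneg _ Hx). pose proof (pos_INR (S N)).
        apply Rmult_le_pos; auto. apply Rmult_le_pos; auto. }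
  split; [intros; apply Hb; auto|]. split.
  - intros a x y Hx Hy n. unfold Bop. destruct (Nat.ltb n (m * N)); [|apply Ceq; simpl; ring].
    rewrite Sh_lin. destruct (Sh_l2 N (S (n / N) * N) x Hx) as [H1 _].
    destruct (Sh_l2 N (S (n / N) * N) y Hy) as [H2 _].
    destruct HKb as [_ [Hlin _]]. rewrite Hlin by auto. ring.
  - apply nsq_bnd_of. intros; apply Hb; auto. exists (INR (S (m * N)) * (MK * INR (S N))). intros.
    rewrite Rmult_assoc. apply Hb; auto.
Qed.

End BSec.

Lemma A_compact N m : compact_op (Aop N m).
Proof.
  apply (fin_compact _ (S m * N)). apply A_bounded.
  intros x _ n Hn. unfold Aop. replace (Nat.ltb n (S m * N)) with false. rewrite Bool.andb_false_r. reflexivity.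
  symmetry; apply Nat.ltb_ge; auto.
Qed.

Lemma B_compact K N m : bounded_op K -> (1 <= N)%nat -> (1 <= m)%nat -> compact_op (Bop K N m).
Proof.
  intros HK HN Hm. apply (fin_compact _ (m * N)). apply B_bounded; auto.
  intros x _ n Hn. unfold Bop. replace (Nat.ltb n (m * N)) with false. reflexivity.
  symmetry; apply Nat.ltb_ge; auto.
Qed.

Lemma A_nil N m : pow_zero (Aop N m) (S m).
Proof.
  assert (H : forall k x n, (n < k * N)%nat -> op_pow (Aop N m) k x n = RtoC 0).
  { induction k; intros x n Hn. simpl in Hn; lia.
    unfold op_pow in *. simpl. unfold Aop at 1. destruct (Nat.leb N n) eqn:E1; simpl; auto.
    destruct (Nat.ltb _ _); auto. apply IHk. apply Nat.leb_le in E1. simpl in Hn. lia. }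
  intros x _ n. destruct (Compare_dec.lt_dec n (S m * N)). apply H; auto.
  unfold op_pow. change (Nat.iter (S m) (Aop N m) x) with (Aop N m (Nat.iter m (Aop N m) x)).
  unfold Aop at 1. replace (Nat.ltb n (S m * N)) with false.
  rewrite Bool.andb_false_r; auto. symmetry; apply Nat.ltb_ge. lia.
Qed.

Lemma B_nil K N m : bounded_op K -> (1 <= N)%nat -> pow_zero (Bop K N m) (S m).
Proof.
  intros HK HN.
  assert (H : forall k x n, ((S m - S k) * N <= n)%nat -> op_pow (Bop K N m) (S k) x n = RtoC 0).
  { induction k; intros x n Hn.
    - unfold op_pow. simpl. unfold Bop. replace (Nat.ltb n (m * N)) with false. reflexivity.
      symmetry; apply Nat.ltb_ge. replace (S m - 1)%nat with m in Hn by lia. exact Hn.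
    - unfold op_pow in *. change (Nat.iter (S (S k)) (Bop K N m) x) with (Bop K N m (Nat.iter (S k) (Bop K N m) x)).
      unfold Bop at 1. destruct (Nat.ltb n (m * N)) eqn:E; auto.
      replace (Sh N (S (n / N) * N) (Nat.iter (S k) (Bop K N m) x)) with (fun _ : nat => RtoC 0).
      rewrite T_zero by auto. apply Ceq; simpl; ring.
      apply functional_extensionality. intros l. unfold Sh. destruct (Nat.ltb l N); auto.
      symmetry. apply IHk. pose proof (Nat.div_mod_eq n N). pose proof (Nat.mod_upper_bound n N ltac:(lia)).
      apply Nat.ltb_lt in E. set (j := (n / N)%nat) in *.
      assert (Hc : (S m - S k <= S j)%nat).
      { destruct (Compare_dec.le_lt_dec (S m - S k) (S j)) as [Hle|Hlt]; auto.
        assert (S j <= S m - S (S k))%nat by lia.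
        assert (S j * N <= (S m - S (S k)) * N)%nat by (apply Nat.mul_le_mono_r; auto). nia. }
      assert ((S m - S k) * N <= S j * N)%nat by (apply Nat.mul_le_mono_r; auto). lia. }
  intros x _ n. apply H. replace (S m - S m)%nat with 0%nat by lia. lia.
Qed.

Lemma ShA N m j x : (j < m)%nat -> Sh N (S j * N) (Aop N m x) = Sh N (j * N) x.
Proof.
  intros Hj. apply functional_extensionality. intros k. unfold Sh, Aop.
  destruct (Nat.ltb k N) eqn:E; auto. apply Nat.ltb_lt in E.
  replace (Nat.leb N (k + S j * N)) with true. replace (Nat.ltb (k + S j * N) (S m * N)) with true.
  simpl. f_equal. simpl. lia.
  symmetry; apply Nat.ltb_lt. nia. symmetry; apply Nat.leb_le. simpl. lia.
Qed.

Lemma cf_diff m j : (1 <= m)%nat -> (1 <= j)%nat -> (cf m (j - 1) - cf m j)%C = RtoC (- / INR m).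
Proof.
  intros Hm Hj. unfold cf. rewrite minus_INR by auto. simpl INR at 1.
  assert (0 < INR m) by (apply lt_0_INR; lia).
  apply Ceq; simpl; [field; lra | ring].
Qed.

Lemma cf_m1 m : (1 <= m)%nat -> cf m (m - 1) = RtoC (- / INR m).
Proof.
  intros Hm. unfold cf. rewrite minus_INR by auto. simpl INR at 1.
  assert (0 < INR m) by (apply lt_0_INR; lia). apply Ceq; simpl; [field; lra | ring].
Qed.

Lemma cf_0 m : (1 <= m)%nat -> cf m 0 = RtoC (-1).
Proof.
  intros Hm. unfold cf. simpl INR.
  assert (0 < INR m) by (apply lt_0_INR; lia). apply Ceq; simpl; [field; lra | ring].
Qed.

Lemma comm_formula K N m x n : bounded_op K -> (1 <= N)%nat -> (1 <= m)%nat -> l2 x ->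
  commutator (Aop N m) (Bop K N m) x n =
  if Nat.ltb n N then K (Pt N x) n
  else if Nat.ltb n (S m * N) then (RtoC (- / INR m) * K (Sh N (n / N * N) x) (n mod N))%C
  else RtoC 0.
Proof.
  intros HK HN Hm Hx. unfold commutator, op_sub, Defs.comp, vsub.
  pose proof (Nat.div_mod_eq n N) as Hdm. pose proof (Nat.mod_upper_bound n N ltac:(lia)) as Hi.
  set (j := (n / N)%nat) in *. set (i := (n mod N)%nat) in *.
  destruct (Nat.ltb n N) eqn:E1.
  - apply Nat.ltb_lt in E1. assert (Hj0 : j = 0%nat) by nia.
    assert (Hin : i = n) by nia.
    unfold Aop at 1. replace (Nat.leb N n) with false by (symmetry; apply Nat.leb_gt; lia). simpl.
    unfold Bop. replace (Nat.ltb n (m * N)) with true by (symmetry; apply Nat.ltb_lt; nia).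
    fold j i. rewrite Hj0, Hin. rewrite (ShA N m 0 x) by lia. rewrite cf_0 by auto.
    replace (Sh N (0 * N) x) with (Pt N x). apply Ceq; simpl; ring.
    apply functional_extensionality; intros k. unfold Sh, Pt. simpl. rewrite Nat.add_0_r. reflexivity.
  - apply Nat.ltb_ge in E1. assert (Hj1 : (1 <= j)%nat) by nia.
    destruct (Nat.ltb n (S m * N)) eqn:E2.
    + apply Nat.ltb_lt in E2. assert (Hjm : (j <= m)%nat) by nia.
      assert (HAB : Aop N m (Bop K N m x) n = (cf m (j - 1) * K (Sh N (j * N) x) i)%C).
      { unfold Aop. replace (Nat.leb N n) with true by (symmetry; apply Nat.leb_le; lia).
        replace (Nat.ltb n (S m * N)) with true by (symmetry; apply Nat.ltb_lt; lia). simpl.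
        unfold Bop. replace (Nat.ltb (n - N) (m * N)) with true by (symmetry; apply Nat.ltb_lt; simpl in E2; lia).
        assert (Hq : (j - 1)%nat = ((n - N) / N)%nat). { apply Nat.div_unique with i; auto. nia. }
        assert (Hr : i = ((n - N) mod N)%nat). { apply Nat.mod_unique with (j - 1)%nat; auto. nia. }
        rewrite <- Hq, <- Hr. replace (S (j - 1)) with j by lia. reflexivity. }
      rewrite HAB. unfold Bop at 1. fold j i.
      destruct (Nat.ltb n (m * N)) eqn:E3.
      * apply Nat.ltb_lt in E3. assert (Hjm' : (j < m)%nat) by nia.
        rewrite (ShA N m j x Hjm'). rewrite <- (cf_diff m j Hm Hj1). ring.
      * apply Nat.ltb_ge in E3. assert (Hjm2 : j = m) by nia. rewrite Hjm2. rewrite (cf_m1 m Hm).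
        apply Ceq; simpl; ring.
    + apply Nat.ltb_ge in E2. unfold Aop at 1.
      replace (Nat.ltb n (S m * N)) with false by (symmetry; apply Nat.ltb_ge; auto).
      rewrite Bool.andb_false_r. unfold Bop. replace (Nat.ltb n (m * N)) with false.
      apply Ceq; simpl; ring. symmetry; apply Nat.ltb_ge; simpl in E2; lia.
Qed.

Theorem proposition5p03 :
  forall K : op, compact_op K ->
  forall eps : R, 0 < eps ->
  exists (A B : op) (k : nat),
    compact_op A /\ compact_op B /\ (1 <= k)%nat /\
    pow_zero A k /\ pow_zero B k /\
    opnorm_lt (op_sub K (commutator A B)) eps.
Proof.
  intros K HK eps He. pose proof (proj1 HK) as HKb.
  destruct (T_bound K HKb) as [MK [HMK0 HMK]].
  set (dl := eps ^ 2 / 16). assert (Hdl : 0 < dl) by (unfold dl; nra).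
  destruct (Fact1 K HK dl Hdl) as [N1 HN1]. destruct (Fact2 K HK dl Hdl) as [N2 HN2].
  set (N := S (Nat.max N1 N2)).
  assert (HN : (1 <= N)%nat) by (unfold N; lia).
  set (C0 := 6 * INR N ^ 2 * MK).
  destruct (INR_archimed (eps ^ 2 / 8) C0) as [m0 Hm0]. nra.
  set (m := S m0). assert (Hm : (1 <= m)%nat) by (unfold m; lia).
  assert (HmC : INR m * (eps ^ 2 / 8) > C0).
  { unfold m. rewrite S_INR. nra. }
  exists (Aop N m), (Bop K N m), (S m).
  split. apply A_compact. split. apply B_compact; auto. split. lia.
  split. apply A_nil. split. apply B_nil; auto.
  exists (sqrt (eps ^ 2 / 2)). split.
  { rewrite <- (sqrt_pow2 eps) at 2 by lra. apply sqrt_lt_1_alt. split. nra. nra. }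
  intros x Hx.
  assert (HNr : 1 <= INR N) by (apply (le_INR 1); auto).
  assert (Hmr : 1 <= INR m) by (apply (le_INR 1); auto).
  set (E1 := fun n => if Nat.ltb n N then K (Qt N x) n else Qt N (K x) n).
  set (D := fun n => if Nat.ltb n N then RtoC 0 else if Nat.ltb n (S m * N)
                     then (RtoC (/ INR m) * K (Sh N (n / N * N) x) (n mod N))%C else RtoC 0).
  destruct (Qt_l2 N x Hx) as [HQx _].
  assert (HKQ : l2 (K (Qt N x))) by (apply HKb; auto).
  assert (HKx : l2 (K x)) by (apply HKb; auto).
  destruct (Qt_l2 N (K x) HKx) as [HQK _].
  destruct (l2_dom (K (Qt N x)) (Qt N (K x)) E1 1 1 HKQ HQK) as [HE1 HE1b]; try lra.
  { intros n. unfold E1. pose proof (sqC_nonneg (K (Qt N x) n)). pose proof (sqC_nonneg (Qt N (K x) n)).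
    destruct (Nat.ltb n N); lra. }
  pose proof (HN1 N ltac:(unfold N; lia) x Hx). pose proof (HN2 N ltac:(unfold N; lia) x Hx).
  set (c := MK * INR (S N) * nsq x / INR m ^ 2).
  destruct (fin_l2 D (S m * N) c) as [HD HDb].
  { intros n Hn. unfold D. destruct (Nat.ltb n N); auto. replace (Nat.ltb n (S m * N)) with false; auto.
    symmetry; apply Nat.ltb_ge; auto. }
  { intros n. unfold D. 
    assert (0 <= c). { unfold c. apply Rmult_le_pos. apply Rmult_le_pos. apply Rmult_le_pos; auto. apply pos_INR.
      apply nsq_nonneg; auto. left. apply Rinv_0_lt_compat. nra. }
    destruct (Nat.ltb n N). rewrite Cmod_0; simpl; lra.
    destruct (Nat.ltb n (S m * N)); [|rewrite Cmod_0; simpl; lra].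
    rewrite Cmod_mult, Rpow_mult_distr, Cmod_INR2.
    destruct (Sh_l2 N (n / N * N) x Hx) as [Hs1 Hs2].
    pose proof (coord_le (K (Sh N (n / N * N) x)) (n mod N) (proj1 HKb _ Hs1)) as Hc1.
    pose proof (HMK _ Hs1) as Hc2.
    assert (Cmod (K (Sh N (n / N * N) x) (n mod N)) ^ 2 <= MK * INR (S N) * nsq x).
    { eapply Rle_trans. apply Hc1. eapply Rle_trans. apply Hc2. rewrite Rmult_assoc. apply Rmult_le_compat_l; auto. }
    unfold c. rewrite pow_inv. unfold Rdiv. rewrite Rmult_comm. apply Rmult_le_compat_r; auto.
    left. apply Rinv_0_lt_compat. nra. }
  assert (Hdec : forall n, op_sub K (commutator (Aop N m) (Bop K N m)) x n = vadd E1 D n).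
  { intros n. unfold op_sub, vsub, vadd. rewrite comm_formula by auto. unfold E1, D.
    destruct (Nat.ltb n N) eqn:E.
    - assert (Hq : Qt N x = vsub x (Pt N x)).
      { apply functional_extensionality; intros k. unfold Qt, Pt, vsub. destruct (Nat.ltb k N); apply Ceq; simpl; ring. }
      rewrite Hq. rewrite T_sub; auto. apply Ceq; simpl; ring. apply Pt_l2; auto.
    - unfold Qt. rewrite E. destruct (Nat.ltb n (S m * N)); apply Ceq; simpl; ring. }
  destruct (vadd_l2_2 E1 D HE1 HD) as [Hs Hsb].
  assert (HsE : l2 (op_sub K (commutator (Aop N m) (Bop K N m)) x)) by (apply (l2_ext _ _ (fun n => eq_sym (Hdec n)) Hs)).
  assert (Hfin : nsq (op_sub K (commutator (Aop N m) (Bop K N m)) x) <= eps ^ 2 / 2 * nsq x).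
  { rewrite (nsq_ext _ _ Hdec). eapply Rle_trans. apply Hsb.
    assert (Hx0 : 0 <= nsq x) by (apply nsq_nonneg; auto).
    assert (HSr : INR (S (S m * N)) <= 3 * INR m * INR N).
    { rewrite S_INR, mult_INR, S_INR. nra. }
    assert (HSN : INR (S N) <= 2 * INR N) by (rewrite S_INR; lra).
    assert (Hprod : INR (S (S m * N)) * (MK * INR (S N)) <= INR m * C0).
    { unfold C0. pose proof (pos_INR (S (S m * N))). pose proof (pos_INR (S N)).
      assert (INR (S (S m * N)) * INR (S N) <= 6 * INR m * INR N ^ 2).
      { assert (INR (S (S m * N)) * INR (S N) <= (3 * INR m * INR N) * (2 * INR N)).
        apply Rmult_le_compat; auto. nra. }
      nra. }
    assert (HDc : INR (S (S m * N)) * c <= eps ^ 2 / 8 * nsq x).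
    { unfold c. 
      replace (INR (S (S m * N)) * (MK * INR (S N) * nsq x / INR m ^ 2)) with
        ((INR (S (S m * N)) * (MK * INR (S N))) * nsq x / INR m ^ 2) by (field; lra).
      apply (Rmult_le_reg_r (INR m ^ 2)). nra.
      unfold Rdiv. rewrite Rmult_assoc, Rinv_l, Rmult_1_r by nra.
      assert (INR (S (S m * N)) * (MK * INR (S N)) * nsq x <= INR m * C0 * nsq x) by (apply Rmult_le_compat_r; auto).
      assert (INR m * C0 * nsq x <= INR m * (INR m * (eps ^ 2 / 8)) * nsq x).
      { apply Rmult_le_compat_r; auto. apply Rmult_le_compat_l; lra. }
      nra. }
    unfold dl in *. nra. }
  unfold l2norm. fold (nsq (op_sub K (commutator (Aop N m) (Bop K N m)) x)) (nsq x).
  rewrite <- sqrt_mult by (nra || (apply nsq_nonneg; auto)).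
  apply sqrt_le_1_alt. exact Hfin.
Qed.
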